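(* Let $n\ge 2$, $x\in\mathbb{R}^{n+1}$ with $|x|<1$, and $p \geq 1$. Then, as symmetric 2-tensors on $S^n$, $$\frac{\nabla_{S^n}^2 |\cdot - x|^p}{|\cdot - x|^p} \geq -\frac{p}{4}\, g .$$
   Context: $S^n\subset\mathbb{R}^{n+1}$ is the unit sphere with its canonical Riemannian metric $g$; $\nabla_{S^n}^2$ is the Riemannian Hessian on $(S^n,g)$; $|\cdot|$ is the Euclidean norm, and $|\cdot-x|^p$ denotes the function $y\mapsto |y-x|^p$ on $S^n$. *)

(* Defs.v *)
From Stdlib Require Import Reals.
Open Scope R_scope.

(* Vectors of R^(n+1) are represented as functions nat -> R; only the
   coordinates 0..n are ever read. *)
Definition dot (n : nat) (u v : nat -> R) : R :=
  sum_f_R0 (fun i => u i * v i) n.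

Definition norm (n : nat) (u : nat -> R) : R := sqrt (dot n u u).

Definition on_sphere (n : nat) (y : nat -> R) : Prop := norm n y = 1.

Definition tangent (n : nat) (y v : nat -> R) : Prop := dot n y v = 0.

Definition sinc (s : R) : R := if Req_EM_T s 0 then 1 else sin s / s.

Definition sphere_exp (n : nat) (y w : nat -> R) : nat -> R :=
  fun i => cos (norm n w) * y i + sinc (norm n w) * w i.

Definition dist_pow (n : nat) (p : R) (x z : nat -> R) : R :=
  Rpower (norm n (fun i => z i - x i)) p.

(* d2 is the Riemannian Hessian quadratic form (Hess f)_y(v,v) of f on S^n:
   the second derivative at t = 0 of f along the geodesic t |-> exp_y(t v). *)
Definition sphere_hessian_quad (n : nat) (f : (nat -> R) -> R)
    (y v : nat -> R) (d2 : R) : Prop :=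
  exists d1 : R -> R,
    (forall t : R,
       derivable_pt_lim (fun s => f (sphere_exp n y (fun i => s * v i))) t (d1 t))
    /\ derivable_pt_lim d1 0 d2.

(* Main.v *)
Require Import Defs.
From Stdlib Require Import Reals Lra Psatz FunctionalExtensionality.
From Coquelicot Require Coquelicot.
Open Scope R_scope.

Lemma dot3 n al be ga (u w z : nat -> R) :
  dot n (fun i => al*u i+be*w i+ga*z i) (fun i => al*u i+be*w i+ga*z i) =
  al^2 * dot n u u + be^2 * dot n w w + ga^2 * dot n z z + 2*al*be*dot n u w
  + 2*al*ga*dot n u z + 2*be*ga*dot n w z.
Proof. unfold dot; induction n; simpl; [ring|rewrite IHn; ring]. Qed.

Lemma dot_sym n u w : dot n u w = dot n w u.
Proof. unfold dot; induction n; simpl; [ring|rewrite IHn; ring]. Qed.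

Lemma dot_scale n k (u : nat -> R) :
  dot n (fun i => k * u i) (fun i => k * u i) = k^2 * dot n u u.
Proof. unfold dot; induction n; simpl; [ring|rewrite IHn; ring]. Qed.

Lemma dot_nonneg n u : 0 <= dot n u u.
Proof. unfold dot; induction n; simpl; nra. Qed.

Lemma ln_sqrt' x : 0 < x -> ln (sqrt x) = ln x / 2.
Proof.
  intros h. assert (hs : 0 < sqrt x) by (apply sqrt_lt_R0; lra).
  rewrite <- (sqrt_sqrt x) at 2 by lra. rewrite ln_mult by lra. lra.
Qed.

Lemma setup n (x y v : nat -> R) t :
  dot n y y = 1 -> dot n y v = 0 ->
  (dot n v v = 0 -> dot n v x = 0) ->
  let a := sqrt (dot n v v) in
  let sa := dot n v x / a in
  dot n (fun i => sphere_exp n y (fun i => t * v i) i - x i)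
        (fun i => sphere_exp n y (fun i => t * v i) i - x i)
  = 1 + dot n x x - 2 * dot n y x * cos (t * a) - 2 * sa * sin (t * a).
Proof.
  intros yy yv s0 a sa.
  assert (Hn : norm n (fun i => t * v i) = Rabs t * a).
  { unfold norm. rewrite dot_scale. replace (t^2) with (Rsqr t) by (unfold Rsqr; ring).
    rewrite sqrt_mult_alt by apply Rle_0_sqr. rewrite sqrt_Rsqr_abs. reflexivity. }
  unfold sphere_exp. rewrite Hn.
  set (Cv := cos (Rabs t * a)). set (Sv := sinc (Rabs t * a)).
  replace (fun i => Cv * y i + Sv * (t * v i) - x i) with
    (fun i => Cv * y i + (Sv*t) * v i + (-1) * x i)
    by (apply functional_extensionality; intro; ring).
  rewrite dot3, yy, yv.
  assert (HC : Cv = cos (t * a)).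
  { unfold Cv. destruct (Rle_or_lt 0 t).
    - rewrite Rabs_right by lra. reflexivity.
    - rewrite Rabs_left by lra. replace (- t * a) with (- (t*a)) by ring. apply cos_neg. }
  rewrite HC.
  assert (ha : 0 <= a) by apply sqrt_pos.
  destruct (Req_dec (dot n v v) 0) as [h0|h0].
  - assert (a0 : a = 0) by (unfold a; rewrite h0; apply sqrt_0).
    unfold sa. rewrite s0 by exact h0. rewrite h0, a0.
    rewrite Rmult_0_r, cos_0, sin_0. ring.
  - assert (apos : 0 < a) by (unfold a; apply sqrt_lt_R0; pose proof (dot_nonneg n v); lra).
    assert (aa : a * a = dot n v v) by (unfold a; apply sqrt_sqrt, dot_nonneg).
    assert (HS : Sv * t = sin (t * a) / a).
    { unfold Sv, sinc. destruct (Req_dec t 0) as [t0|t0].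
      - subst t. rewrite Rmult_0_l, sin_0. field. lra.
      - destruct (Req_EM_T (Rabs t * a) 0) as [e|e].
        + exfalso. apply Rmult_integral in e. destruct e as [e|e]; [|lra].
          apply t0. destruct (Rle_or_lt 0 t); [rewrite Rabs_right in e|rewrite Rabs_left in e]; lra.
        + destruct (Rle_or_lt 0 t).
          * rewrite Rabs_right by lra. field. lra.
          * rewrite Rabs_left by lra. replace (- t * a) with (- (t*a)) by ring.
            rewrite sin_neg. field. lra. }
    rewrite HS. unfold sa. rewrite <- aa.
    pose proof (sin2_cos2 (t*a)) as sc. unfold Rsqr in sc.
    replace ((sin (t * a) / a) ^ 2 * (a * a)) with (sin (t*a) * sin (t*a)) by (field; lra).
    replace (cos (t * a) ^ 2 * 1) with (1 - sin (t * a) * sin (t * a)) by lra.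
    field. lra.
Qed.
Module CQ.
Import Coquelicot.Coquelicot.

Lemma d1_lemma (p c sa a r2 t : R) :
  (forall t, 0 < 1 + r2 - 2*c*cos (t*a) - 2*sa*sin (t*a)) ->
  is_derive (fun t => exp (p * (ln (1 + r2 - 2*c*cos (t*a) - 2*sa*sin (t*a)) / 2))) t
   (exp (p * (ln (1 + r2 - 2*c*cos (t*a) - 2*sa*sin (t*a)) / 2)) * (p/2)
     * (2*c*a*sin (t*a) - 2*sa*a*cos (t*a)) / (1 + r2 - 2*c*cos (t*a) - 2*sa*sin (t*a))).
Proof.
  intros g. specialize (g t) as gt. auto_derive.
  - exact gt.
  - unfold Rminus, Rdiv. field. lra.
Qed.

Lemma d2_lemma (p c sa a r2 : R) :
  (forall t, 0 < 1 + r2 - 2*c*cos (t*a) - 2*sa*sin (t*a)) ->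
  is_derive (fun t => exp (p * (ln (1 + r2 - 2*c*cos (t*a) - 2*sa*sin (t*a)) / 2)) * (p/2)
     * (2*c*a*sin (t*a) - 2*sa*a*cos (t*a)) / (1 + r2 - 2*c*cos (t*a) - 2*sa*sin (t*a))) 0
   (exp (p * (ln (1 + r2 - 2*c) / 2)) *
     (p*c*(a*a)/(1 + r2 - 2*c) + p*(p-2)*(sa*a)^2/(1 + r2 - 2*c)^2)).
Proof.
  intros g. specialize (g 0) as g0. rewrite Rmult_0_l, cos_0, sin_0 in g0.
  auto_derive.
  - rewrite Rmult_0_l, cos_0, sin_0. repeat split; lra.
  - rewrite Rmult_0_l, cos_0, sin_0.
    replace (1 + r2 + - (2 * c * 1) + - (2 * sa * 0)) with (1 + r2 - 2*c) by ring.
    unfold Rminus, Rdiv. field. lra.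
Qed.

Lemma d1_R (p c sa a r2 t : R) :
  (forall t, 0 < 1 + r2 - 2*c*cos (t*a) - 2*sa*sin (t*a)) ->
  derivable_pt_lim (fun t => exp (p * (ln (1 + r2 - 2*c*cos (t*a) - 2*sa*sin (t*a)) / 2))) t
   (exp (p * (ln (1 + r2 - 2*c*cos (t*a) - 2*sa*sin (t*a)) / 2)) * (p/2)
     * (2*c*a*sin (t*a) - 2*sa*a*cos (t*a)) / (1 + r2 - 2*c*cos (t*a) - 2*sa*sin (t*a))).
Proof. intros; apply is_derive_Reals, d1_lemma; auto. Qed.

Lemma d2_R (p c sa a r2 : R) :
  (forall t, 0 < 1 + r2 - 2*c*cos (t*a) - 2*sa*sin (t*a)) ->
  derivable_pt_lim (fun t => exp (p * (ln (1 + r2 - 2*c*cos (t*a) - 2*sa*sin (t*a)) / 2)) * (p/2)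
     * (2*c*a*sin (t*a) - 2*sa*a*cos (t*a)) / (1 + r2 - 2*c*cos (t*a) - 2*sa*sin (t*a))) 0
   (exp (p * (ln (1 + r2 - 2*c) / 2)) *
     (p*c*(a*a)/(1 + r2 - 2*c) + p*(p-2)*(sa*a)^2/(1 + r2 - 2*c)^2)).
Proof. intros; apply is_derive_Reals, d2_lemma; auto. Qed.
End CQ.

Theorem mainTheorem3 (n : nat) (x : nat -> R) (p : R) :
  (2 <= n)%nat -> norm n x < 1 -> 1 <= p ->
  forall y v : nat -> R, on_sphere n y -> tangent n y v ->
  exists d2 : R,
    sphere_hessian_quad n (dist_pow n p x) y v d2 /\
    d2 / dist_pow n p x y >= - (p / 4) * dot n v v.
Proof.
  intros Hn Hx Hp y v Hy Hv.
  unfold on_sphere, Defs.norm in Hy. unfold tangent in Hv. unfold Defs.norm in Hx.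
  assert (yy : dot n y y = 1).
  { rewrite <- (sqrt_sqrt (dot n y y)) by apply dot_nonneg. rewrite Hy. ring. }
  pose proof (dot_nonneg n x) as r2nn.
  assert (r2lt : dot n x x < 1).
  { rewrite <- (sqrt_sqrt (dot n x x)) by exact r2nn.
    pose proof (sqrt_pos (dot n x x)). nra. }
  assert (xy : dot n x y = dot n y x) by apply dot_sym.
  assert (xv : dot n x v = dot n v x) by apply dot_sym.
  assert (cs : (dot n y x)^2 <= dot n x x).
  { pose proof (dot_nonneg n (fun i => 1 * x i + (- dot n y x) * y i + 0 * v i)) as h.
    rewrite dot3, yy, xy in h. nra. }
  assert (s0 : dot n v v = 0 -> dot n v x = 0).
  { intros h0. destruct (Req_dec (dot n v x) 0) as [e|e]; [exact e|exfalso].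
    pose proof (dot_nonneg n (fun i => 1 * x i + (- (dot n x x + 1)/(2 * dot n v x)) * v i + 0 * y i)) as h.
    rewrite dot3, h0, xv in h.
    replace (1 ^ 2 * dot n x x + (- (dot n x x + 1) / (2 * dot n v x)) ^ 2 * 0 + 0 ^ 2 * dot n y y +
      2 * 1 * (- (dot n x x + 1) / (2 * dot n v x)) * dot n v x + 2 * 1 * 0 * dot n x y +
      2 * (- (dot n x x + 1) / (2 * dot n v x)) * 0 * dot n v y) with (-1) in h by (field; exact e).
    lra. }
  assert (bes : dot n v v * (dot n v v * (dot n x x - (dot n y x)^2) - (dot n v x)^2) >= 0).
  { pose proof (dot_nonneg n (fun i => dot n v v * x i + (- (dot n v v * dot n y x)) * y i + (- dot n v x) * v i)) as h.
    rewrite dot3, yy, xy, xv, Hv in h. nra. }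
  set (a := sqrt (dot n v v)).
  assert (ha : 0 <= a) by apply sqrt_pos.
  assert (aa : a * a = dot n v v) by (unfold a; apply sqrt_sqrt, dot_nonneg).
  set (sa := dot n v x / a).
  set (c := dot n y x). set (r2 := dot n x x).
  assert (sab : sa^2 <= r2 - c^2).
  { destruct (Req_dec (dot n v v) 0) as [h0|h0].
    - assert (a0 : a = 0) by (unfold a; rewrite h0; apply sqrt_0).
      unfold sa. rewrite a0. unfold Rdiv. rewrite Rinv_0. unfold c, r2. nra.
    - assert (apos : 0 < a) by (unfold a; apply sqrt_lt_R0; pose proof (dot_nonneg n v); lra).
      unfold sa. rewrite <- aa in bes.
      assert (h : (dot n v x)^2 <= a*a*(r2 - c^2)).
      { unfold c, r2. assert (0 < a*a) by nra.
        apply Rmult_le_reg_l with (a*a); [exact H|]. nra. }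
      replace ((dot n v x / a)^2) with ((dot n v x)^2 / (a*a)) by (field; repeat split; lra).
      apply Rmult_le_reg_l with (a*a); [nra|].
      replace (a * a * ((dot n v x)^2 / (a*a))) with ((dot n v x)^2) by (field; repeat split; lra). lra. }
  assert (gpos : forall t, 0 < 1 + r2 - 2*c*cos (t*a) - 2*sa*sin (t*a)).
  { intro t. pose proof (sin2_cos2 (t*a)) as sc. unfold Rsqr in sc.
    pose proof (pow2_ge_0 (c * sin (t*a) - sa * cos (t*a))).
    assert (hu : (c * cos (t*a) + sa * sin (t*a))^2 <= r2) by nra.
    assert (c * cos (t*a) + sa * sin (t*a) < 1).
    { destruct (Rlt_or_le (c * cos (t*a) + sa * sin (t*a)) 1) as [l|l]; [exact l|].
      exfalso. assert (1 <= (c * cos (t*a) + sa * sin (t*a))^2) by nra. unfold r2 in *. lra. }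
    nra. }
  assert (Fid : forall t, dist_pow n p x (sphere_exp n y (fun i => t * v i)) =
     exp (p * (ln (1 + r2 - 2*c*cos (t*a) - 2*sa*sin (t*a)) / 2))).
  { intro t. unfold dist_pow, Rpower, Defs.norm.
    rewrite (setup n x y v t yy Hv s0). fold a. fold sa c r2.
    rewrite ln_sqrt' by apply gpos. reflexivity. }
  assert (y0 : sphere_exp n y (fun i => 0 * v i) = y).
  { apply functional_extensionality; intro i. unfold sphere_exp, Defs.norm.
    rewrite dot_scale. replace (0^2 * dot n v v) with 0 by ring. rewrite sqrt_0, cos_0. ring. }
  exists (exp (p * (ln (1 + r2 - 2*c) / 2)) *
     (p*c*(a*a)/(1 + r2 - 2*c) + p*(p-2)*(sa*a)^2/(1 + r2 - 2*c)^2)).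
  split.
  - exists (fun t => exp (p * (ln (1 + r2 - 2*c*cos (t*a) - 2*sa*sin (t*a)) / 2)) * (p/2)
     * (2*c*a*sin (t*a) - 2*sa*a*cos (t*a)) / (1 + r2 - 2*c*cos (t*a) - 2*sa*sin (t*a))).
    split.
    + intro t. replace (fun s => dist_pow n p x (sphere_exp n y (fun i => s * v i))) with
        (fun t => exp (p * (ln (1 + r2 - 2*c*cos (t*a) - 2*sa*sin (t*a)) / 2)))
        by (apply functional_extensionality; intro; symmetry; apply Fid).
      apply CQ.d1_R, gpos.
    + apply CQ.d2_R, gpos.
  - rewrite <- y0, Fid. rewrite Rmult_0_l, cos_0, sin_0.
    replace (1 + r2 - 2 * c * 1 - 2 * sa * 0) with (1 + r2 - 2*c) by ring.
    specialize (gpos 0). rewrite Rmult_0_l, cos_0, sin_0 in gpos.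
    assert (Dpos : 0 < 1 + r2 - 2*c) by lra. clear gpos.
    set (D := 1 + r2 - 2*c) in *.
    set (E := exp (p * (ln D / 2))).
    assert (Epos : 0 < E) by apply exp_pos.
    rewrite <- aa.
    set (A := a * a). set (S2 := (sa*a)^2).
    assert (S2le : S2 <= A * (r2 - c^2)) by (unfold S2, A; nra).
    assert (Ann : 0 <= A) by (unfold A; nra).
    assert (S2nn : 0 <= S2) by (unfold S2; nra).
    assert (K : 0 <= c*A*D + (p-2)*S2 + A*D^2/4).
    { assert (e : c*A*D + A*D^2/4 - A*(r2-c^2) = A*(1-r2)^2/4) by (unfold D; field).
      assert (0 <= A*(1-r2)^2) by (apply Rmult_le_pos; [lra| apply pow2_ge_0]).
      assert (0 <= (p-1)*S2) by (apply Rmult_le_pos; lra).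
      nra. }
    assert (Heq : E * (p * c * A / D + p * (p - 2) * S2 / D ^ 2) / E + p/4 * A
      = p * (c*A*D + (p-2)*S2 + A*D^2/4) / D^2).
    { field. split; apply Rgt_not_eq; assumption. }
    assert (0 <= p * (c*A*D + (p-2)*S2 + A*D^2/4) / D^2).
    { apply Rmult_le_pos; [apply Rmult_le_pos; lra|]. apply Rlt_le, Rinv_0_lt_compat, pow_lt; assumption. }
    lra.
Qed.
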